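(* Assume the setting in the context. Let $x_i,x_j,x_k\in X$ be distinct, and assume $x_k$ is neither a parent of $x_i$ nor a parent of $x_j$. If there exist $G_1,G_2\in\mathcal G$, $M\subseteq X\setminus\{x_i,x_k\}$ and $N\subseteq X\setminus\{x_i,x_j\}$ with $x_i-G_1(M\cup\{x_k\})\perp\!\!\!\perp x_j-G_2(N)$, then there exist $G_1',G_2'\in\mathcal G$, $M'\subseteq X\setminus\{x_i,x_k\}$ and $N'\subseteq X\setminus\{x_i,x_j\}$ with $x_i-G_1'(M')\perp\!\!\!\perp x_j-G_2'(N')$.
   Context: Model: $X$ is a finite set of observed random variables and $U$ a finite set of unobserved random variables; $V=X\cup U$ and $G=(V,E)$ is a DAG on $V$. Each $v_i\in V$ satisfies $v_i=\sum_{x_j\in \mathrm{pa}(v_i)\cap X} f^{(i)}_j(x_j)+\sum_{u_k\in\mathrm{pa}(v_i)\cap U} f^{(i)}_k(u_k)+n_i$, where the $f$'s are nonlinear functions and the external noises $n_i$ are jointly independent. ''Parent'', ''ancestor'', ''path'', ''d-separation'' refer to $G$ (a path has distinct vertices). Causal Faithfulness Condition (CFC): any conditional independence among variables of $V$ that is not entailed by d-separation in $G$ does not hold. $\perp\!\!\!\perp$ denotes statistical independence, $\not\perp\!\!\!\perp$ dependence. Function class: $\mathcal G$ is a class of generalized additive functions: for $G\in\mathcal G$ and a set $M$ of observed variables, $G(M)=\sum_{x_m\in M} g_m(x_m)$ (with $G(\emptyset)=0$). It satisfies: for any $x_i,x_j\in X$, sets $M,N\subseteq X$, $G_1,G_2\in\mathcal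 G$ and external noise $n_k$, if $n_k\not\perp\!\!\!\perp x_i-G_1(M)$ and $n_k\not\perp\!\!\!\perp x_j-G_2(N)$ then $x_i-G_1(M)\not\perp\!\!\!\perp x_j-G_2(N)$. Definitions, for $X'\subseteq X$ and $x_i,x_j\in X'$: an unobserved causal path (UCP) from $x_i$ to $x_j$ w.r.t. $X'$ is a directed path $x_i\to\cdots\to v_k\to x_j$ in $G$ with $v_k\notin X'$; an unobserved backdoor path (UBP) between $x_i$ and $x_j$ w.r.t. $X'$ is a path $x_i\leftarrow v_k\leftarrow\cdots\leftarrow v\to\cdots\to v_l\to x_j$ with $v_k,v_l\notin X'$ (allowing $v=v_k$, $v=v_l$, or $v=v_k=v_l$; $v$ may be in $X'$). ''UBP/UCP between $x_i$ and $x_j$'' means a UBP or a UCP in either direction. $x_j$ is a visible parent of $x_i$ w.r.t. $X'$ if $x_j$ is a parent of $x_i$ and there is no UBP/UCP between them w.r.t. $X'$; $(x_i,x_j)$ is a visible non-edge w.r.t. $X'$ if there is no edge between them and no UBP/UCP between them w.r.t. $X'$; $(x_i,x_j)$ is invisible w.r.t. $X'$ if there is a UBP/UCP between them w.r.t. $X'$. When $X'$ is omitted, $X'=X$. Standing facts (taken as known), for $X'\subseteq X$ and distinct $x_i,x_j\in X'$: (F1) $x_j$ is a visible parent of $x_i$ w.r.t. $X'$ iff [for all $G_1,G_2\in\mathcal G$, $M\subseteq X'\setminus\{x_i,x_j\}$, $N\subseteq X'\setminus\{x_j\}$: $x_i-G_1(M)\not\perp\!\!\!\perp x_j-G_2(N)$]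 and [there exist $G_1,G_2\in\mathcal G$, $M\subseteq X'\setminus\{x_i\}$, $N\subseteq X'\setminus\{x_i,x_j\}$ with $x_i-G_1(M)\perp\!\!\!\perp x_j-G_2(N)$]. (F2) $(x_i,x_j)$ is a visible non-edge w.r.t. $X'$ iff there exist $G_1,G_2\in\mathcal G$ and $M,N\subseteq X'\setminus\{x_i,x_j\}$ with $x_i-G_1(M)\perp\!\!\!\perp x_j-G_2(N)$. (F3) $(x_i,x_j)$ is invisible w.r.t. $X'$ iff for all $M\subseteq X'\setminus\{x_i\}$, $N\subseteq X'\setminus\{x_j\}$, $G_1,G_2\in\mathcal G$: $x_i-G_1(M)\not\perp\!\!\!\perp x_j-G_2(N)$. *)

(* Defs.v *)
From HB Require Import structures.
From mathcomp Require Import all_boot all_order all_algebra.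
From mathcomp Require Import all_classical all_reals all_analysis.
Set Implicit Arguments. Unset Strict Implicit. Unset Printing Implicit Defensive.
Import Order.TTheory GRing.Theory Num.Theory.
Local Open Scope classical_set_scope.
Local Open Scope ring_scope.

Section Defs.
Variables (R : realType) (d : measure_display) (T : measurableType d).
Variable (V : finType).

(* ---------- graph notions (G = (V, E), E u v means u -> v) ---------- *)

Definition acyclic (E : rel V) : Prop :=
  forall (v : V) (s : seq V), ~ path E v (rcons s v).

(* unobserved causal path from a to b w.r.t. X' :
   a -> ... -> v -> b, distinct vertices, v \notin X' *)
Definition UCP (E : rel V) (X' : {set V}) (a b : V) : Prop :=
  exists s : seq V,
    [/\ path E a (rcons s b), uniq (a :: rcons s b) & last a s \notin X'].

(* unobserved backdoor path between a and b w.r.t. X' :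
   a <- vk <- ... <- v -> ... -> vl -> b, distinct vertices,
   vk, vl \notin X' (v = vk and/or v = vl allowed, v may be in X') *)
Definition UBP (E : rel V) (X' : {set V}) (a b : V) : Prop :=
  exists (v : V) (s1 s2 : seq V),
    [/\ path E v (rcons s1 a), path E v (rcons s2 b),
        uniq (v :: rcons s1 a ++ rcons s2 b),
        last v s1 \notin X' & last v s2 \notin X'].

Definition invisible (E : rel V) (X' : {set V}) (a b : V) : Prop :=
  [\/ UBP E X' a b, UCP E X' a b | UCP E X' b a].

Definition visible_parent (E : rel V) (X' : {set V}) (a b : V) : Prop :=
  E b a /\ ~ invisible E X' a b.

Definition visible_nonedge (E : rel V) (X' : {set V}) (a b : V) : Prop :=
  [/\ ~~ E a b, ~~ E b a & ~ invisible E X' a b].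

Definition indep (P : probability T R) (Y Z : T -> R) : Prop :=
  forall A B : set R, measurable A -> measurable B ->
    P (Y @^-1` A `&` Z @^-1` B) = (P (Y @^-1` A) * P (Z @^-1` B))%E.

Definition mutually_indep (P : probability T R) (n : V -> T -> R) : Prop :=
  forall (S : {set V}) (A : V -> set R), (forall v, measurable (A v)) ->
    P (\big[setI/setT]_(v in S) (n v @^-1` A v)) =
    \big[*%E/1%E]_(v in S) P (n v @^-1` A v).

(* structural equations: v = sum_{u parent of v} f v u (u) + n_v
   (observed and unobserved parents together) *)
Definition SEM (E : rel V) (x n : V -> T -> R) (f : V -> V -> R -> R) : Prop :=
  forall (v : V) (w : T), x v w = \sum_(u in V | E u v) f v u (x u w) + n v w.

(* an element of the function class is a family g = (g_m)_m;
   G(M) = sum_{m in M} g_m(x_m); residual x_i - G(M) *)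
Definition resid (x : V -> T -> R) (g : V -> R -> R) (M : {set V}) (i : V)
  : T -> R := fun w => x i w - \sum_(m in M) g m (x m w).

Definition class_property (P : probability T R) (X : {set V})
  (x n : V -> T -> R) (GG : (V -> R -> R) -> Prop) : Prop :=
  forall (i j k : V) (M N : {set V}) (G1 G2 : V -> R -> R),
    i \in X -> j \in X -> M \subset X -> N \subset X -> GG G1 -> GG G2 ->
    ~ indep P (n k) (resid x G1 M i) -> ~ indep P (n k) (resid x G2 N j) ->
    ~ indep P (resid x G1 M i) (resid x G2 N j).

Definition fact_F1 (P : probability T R) (X : {set V}) (E : rel V)
  (x : V -> T -> R) (GG : (V -> R -> R) -> Prop) : Prop :=
  forall (X' : {set V}) (i j : V), X' \subset X -> i \in X' -> j \in X' ->
  i != j ->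
  (visible_parent E X' i j <->
    (forall (G1 G2 : V -> R -> R) (M N : {set V}), GG G1 -> GG G2 ->
       M \subset X' :\: [set i; j] -> N \subset X' :\ j ->
       ~ indep P (resid x G1 M i) (resid x G2 N j)) /\
    (exists (G1 G2 : V -> R -> R) (M N : {set V}),
       [/\ GG G1, GG G2, M \subset X' :\ i, N \subset X' :\: [set i; j] &
           indep P (resid x G1 M i) (resid x G2 N j)])).

Definition fact_F2 (P : probability T R) (X : {set V}) (E : rel V)
  (x : V -> T -> R) (GG : (V -> R -> R) -> Prop) : Prop :=
  forall (X' : {set V}) (i j : V), X' \subset X -> i \in X' -> j \in X' ->
  i != j ->
  (visible_nonedge E X' i j <->
    exists (G1 G2 : V -> R -> R) (M N : {set V}),
       [/\ GG G1, GG G2, M \subset X' :\: [set i; j],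
           N \subset X' :\: [set i; j] &
           indep P (resid x G1 M i) (resid x G2 N j)]).

Definition fact_F3 (P : probability T R) (X : {set V}) (E : rel V)
  (x : V -> T -> R) (GG : (V -> R -> R) -> Prop) : Prop :=
  forall (X' : {set V}) (i j : V), X' \subset X -> i \in X' -> j \in X' ->
  i != j ->
  (invisible E X' i j <->
    forall (G1 G2 : V -> R -> R) (M N : {set V}), GG G1 -> GG G2 ->
       M \subset X' :\ i -> N \subset X' :\ j ->
       ~ indep P (resid x G1 M i) (resid x G2 N j)).

End Defs.

(* Main.v *)
Require Import Defs.
From HB Require Import structures.
From mathcomp Require Import all_boot all_order all_algebra.
From mathcomp Require Import all_classical all_reals all_analysis.
Import Order.TTheory GRing.Theory Num.Theory.
Local Open Scope classical_set_scope.
Local Open Scope ring_scope.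


Lemma indep_sym (R : realType) (d : measure_display) (T : measurableType d)
  (P : probability T R) (Y Z : T -> R) : indep P Y Z -> indep P Z Y.
Proof. by move=> H A B mA mB; rewrite setIC muleC; apply: H. Qed.
Arguments indep_sym {R d T P Y Z}.

Lemma last_edge (V : finType) (E : rel V) (v a : V) (s : seq V) :
  path E v (rcons s a) -> E (last v s) a.
Proof. by rewrite rcons_path => /andP[]. Qed.
Arguments last_edge {V E v a s}.

Lemma notin_shrink (V : finType) (E : rel V) (X : {set V}) (k a u : V) :
  E u a -> ~~ E k a -> u \notin X :\ k -> u \notin X.
Proof.
move=> Hua Hka; rewrite in_setD1 negb_and negbK; case/orP => [/eqP Hu|//].
by rewrite -Hu Hua in Hka.
Qed.
Arguments notin_shrink {V E X k a u}.

Lemma invis_shrink (V : finType) (E : rel V) (X : {set V}) (i j k : V) :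
  ~~ E k i -> ~~ E k j -> invisible E (X :\ k) i j -> invisible E X i j.
Proof.
move=> Hki Hkj [[v [s1 [s2 [p1 p2 u l1 l2]]]]|[s [p u l]]|[s [p u l]]].
- apply: Or31; exists v, s1, s2; split => //.
  + exact: (notin_shrink (last_edge p1) Hki l1).
  + exact: (notin_shrink (last_edge p2) Hkj l2).
- apply: Or32; exists s; split => //; exact: (notin_shrink (last_edge p) Hkj l).
- apply: Or33; exists s; split => //; exact: (notin_shrink (last_edge p) Hki l).
Qed.
Arguments invis_shrink {V E X i j k}.

Theorem proposition2
  (R : realType) (d : measure_display) (T : measurableType d)
  (P : probability T R) (V : finType) (X : {set V}) (E : rel V)
  (x n : V -> T -> R) (f : V -> V -> R -> R) (GG : (V -> R -> R) -> Prop)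
  (Hdag : acyclic E)
  (Hf : forall v u, measurable_fun setT (f v u))
  (Hn : forall v, measurable_fun setT (n v))
  (Hsem : SEM E x n f)
  (Hnoise : mutually_indep P n)
  (HGG : forall g, GG g -> forall m, measurable_fun setT (g m))
  (Hclass : class_property P X x n GG)
  (HF1 : fact_F1 P X E x GG) (HF2 : fact_F2 P X E x GG)
  (HF3 : fact_F3 P X E x GG)
  (i j k : V) (Hi : i \in X) (Hj : j \in X) (Hk : k \in X)
  (Hij : i != j) (Hik : i != k) (Hjk : j != k)
  (Hki : ~~ E k i) (Hkj : ~~ E k j) :
  (exists (G1 G2 : V -> R -> R) (M N : {set V}),
     [/\ GG G1, GG G2, M \subset X :\: [set i; k],
         N \subset X :\: [set i; j] &
         indep P (resid x G1 (k |: M) i) (resid x G2 N j)]) ->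
  exists (G1' G2' : V -> R -> R) (M' N' : {set V}),
     [/\ GG G1', GG G2', M' \subset X :\: [set i; k],
         N' \subset X :\: [set i; j] &
         indep P (resid x G1' M' i) (resid x G2' N' j)].
Proof.
case=> G1 [G2 [M [N [g1 g2 sM sN hind]]]].
have sKM : k |: M \subset X :\ i.
  apply/fintype.subsetP => y; rewrite !inE; case/orP => [/eqP ->|];
    first by rewrite eq_sym Hik Hk.
  by move/(fintype.subsetP sM); rewrite !inE negb_or => /andP[/andP[-> _] ->].
have sNj : N \subset X :\ j.
  apply/fintype.subsetP => y /(fintype.subsetP sN); rewrite !inE negb_or.
  by case/andP => /andP[_ ->] ->.
have sNi : N \subset X :\: [set j; i].
  apply: fintype.subset_trans sN _; apply/fintype.subsetP => y; rewrite !inE !negb_or.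
  by case/andP => /andP[-> ->] ->.
have nIij : ~ invisible E X i j.
  by move=> /(HF3 X i j (subxx _) Hi Hj Hij) H; exact: (H _ _ _ _ g1 g2 sKM sNj).
have nIji : ~ invisible E X j i.
  move=> /(HF3 X j i (subxx _) Hj Hi); rewrite eq_sym => H.
  by apply: (H Hij _ _ _ _ g2 g1 sNj sKM); exact: indep_sym.
have nI' : ~ invisible E (X :\ k) i j.
  by move=> /(invis_shrink Hki Hkj).
have sX' : X :\ k \subset X by exact: subD1set.
have Hi' : i \in X :\ k by rewrite in_setD1 Hik Hi.
have Hj' : j \in X :\ k by rewrite in_setD1 Hjk Hj.
have Hji : j != i by rewrite eq_sym.
case Eij: (E i j).
  have vp : visible_parent E X j i by split.
  have [H _] := (proj1 (HF1 X j i (subxx _) Hj Hi Hji)) vp.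
  exfalso; apply: (H _ _ _ _ g2 g1 sNi sKM); exact: indep_sym.
case Eji: (E j i).
  have vp : visible_parent E (X :\ k) i j by split.
  have [_ [H1 [H2 [M1 [N1 [h1 h2 s1 s2 hi]]]]]] :=
    (proj1 (HF1 (X :\ k) i j sX' Hi' Hj' Hij)) vp.
  exists H1, H2, M1, N1; split => //.
    apply: fintype.subset_trans s1 _; apply/fintype.subsetP => y; rewrite !inE negb_or.
    by case/andP => -> /andP[-> ->].
  apply: fintype.subset_trans s2 _; apply/fintype.subsetP => y; rewrite !inE.
  by case/andP => -> /andP[_ ->].
have vn : visible_nonedge E (X :\ k) i j by split; rewrite ?Eij ?Eji.
have [H1 [H2 [M1 [N1 [h1 h2 s1 s2 hi]]]]] :=
  (proj1 (HF2 (X :\ k) i j sX' Hi' Hj' Hij)) vn.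
exists H1, H2, M1, N1; split => //.
  apply: fintype.subset_trans s1 _; apply/fintype.subsetP => y; rewrite !inE !negb_or.
  by case/andP => /andP[-> _] /andP[-> ->].
apply: fintype.subset_trans s2 _; apply/fintype.subsetP => y; rewrite !inE.
by case/andP => -> /andP[_ ->].
Qed.
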